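(* Assume (A1)–(A6), and let $u^*(r)=u^*_{\lambda^*}(r(\lambda^* )^{-1/\theta})$, where $(u^*_{\lambda^*},\lambda^* )$ is the singular solution of Theorem 1.1 (so $u^*$ is a singular solution of $L(u)+e^{f(u)}=0$). Then $$u^*(r)=\mathcal F^{-1}\big(K r^{\theta/(\beta+1)}(1+\delta(r))\big),\qquad K=\frac{\beta+1}{\theta}(\alpha-\beta-1)^{-\frac{1}{\beta+1}},$$ where $\delta(r)\to0$ as $r\to0^+$.
   Context: $L(u)(r)=r^{-\gamma}(r^{\alpha}|u'|^{\beta}u')'$, $\theta=\gamma+2+\beta-\alpha$, $g=f^{-1}$, $\mathcal F(u)=\int_u^{\infty}e^{-f(s)/(\beta+1)}ds$ (finite and strictly decreasing under the assumptions). ''$O(g''(t))$'' means bounded by $C|g''(t)|$ for large $t$, $o(t)$ any $h$ with $h/t\to0$. (A1) $f\in C^4([0,\infty))$, $f'>0$, $f\to+\infty$. (A2) $g''(t)\to0$ and $f(g(t)+\varepsilon(t))/t\to1$ for every $\varepsilon(t)=O(g''(t))$. (A3) $g'(t)/g'(t+h(t))\to1$ for $h=o(t)$. (A4) $\frac{g''(t)}{g'(t)}\ln g'(t)\to0$. (A5)(a) $g'''(\ln g')^n=O(g'')$, $n=0,1,2$, $g^{(4)}\ln g'=O(g'')$; (b) $\sup_{s\ge t}|g''(s)|=O(g''(t))$, $g''(t+h(t))=O(g''(t))$ for $h=o(t)$. (A6) $\alpha>\beta+1$, $\beta\ge0$, $\theta>0$. Theorem 1.1: there exist $\lambda^*>0$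 and $u^*_{\lambda^*}\in C^2((0,1])$ with $L(u)+\lambda^*e^{f(u)}=0$ on $(0,1)$, $u(1)=0$, $u(r)\to+\infty$ as $r\to0^+$, and $u^*_{\lambda^*}(r)=g(Z(r))+O(g''(\ln r^{-\theta}))$, $Z(r)=\ln\{\theta^{\beta+1}(\alpha-\beta-1)\}-\ln\lambda^*-\theta\ln r+(\beta+1)\ln\{g'(\tau)+(\beta+1)g''(\tau)\ln g'(\tau)\}$, $\tau=\ln\frac{\beta+1}{\lambda^*r^\theta}$. *)

(* Defs.v *)
From Stdlib Require Import Reals.
From Coquelicot Require Import Coquelicot.
Open Scope R_scope.

(* x^b for x >= 0, with the conventions 0^b = 0 (b <> 0) and 0^0 = 1.
   (Stdlib's Rpower is only meaningful for x > 0.) *)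
Definition rpow (x b : R) : R :=
  if Rlt_dec 0 x then Rpower x b else if Req_EM_T b 0 then 1 else 0.

(* f in C^4([0,oo)) with f' > 0 on [0,oo): f is the restriction to [0,oo)
   of a C^4 function h on R (one-sided derivatives at 0 are those of h). *)
Definition C4_pos_deriv_nonneg (f : R -> R) : Prop :=
  exists h : R -> R,
    (forall x, 0 <= x -> h x = f x) /\
    (forall x, forall k : nat, (k <= 4)%nat -> ex_derive_n h k x) /\
    (forall x, continuous (Derive_n h 4) x) /\
    (forall x, 0 <= x -> 0 < Derive h x).

Definition bigO_inf (e h : R -> R) : Prop :=
  exists C M : R, forall t, M < t -> Rabs (e t) <= C * Rabs (h t).

Definition littleo_t (h : R -> R) : Prop :=
  is_lim (fun t => h t / t) p_infty 0.

Definition flux (alpha beta : R) (u : R -> R) (s : R) : R :=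
  Rpower s alpha * rpow (Rabs (Derive u s)) beta * Derive u s.

Definition Lop (alpha beta gamma : R) (u : R -> R) (r : R) : R :=
  Rpower r (- gamma) * Derive (flux alpha beta u) r.

Definition calF (f : R -> R) (beta u : R) : R :=
  RInt_gen (fun s => exp (- f s / (beta + 1))) (at_point u) (Rbar_locally p_infty).

(* Hypotheses (A1)-(A6); g is the inverse of f. *)
Definition hypA (f g : R -> R) (alpha beta gamma : R) : Prop :=
  let g1 := Derive_n g 1 in
  let g2 := Derive_n g 2 in
  let g3 := Derive_n g 3 in
  let g4 := Derive_n g 4 in
  C4_pos_deriv_nonneg f /\ is_lim f p_infty p_infty /\
  is_lim g2 p_infty 0 /\
  (forall eps : R -> R, bigO_inf eps g2 ->
     is_lim (fun t => f (g t + eps t) / t) p_infty 1) /\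
  (forall h : R -> R, littleo_t h ->
     is_lim (fun t => g1 t / g1 (t + h t)) p_infty 1) /\
  is_lim (fun t => g2 t / g1 t * ln (g1 t)) p_infty 0 /\
  (forall n : nat, (n <= 2)%nat -> bigO_inf (fun t => g3 t * (ln (g1 t)) ^ n) g2) /\
  bigO_inf (fun t => g4 t * ln (g1 t)) g2 /\
  (exists C M : R, forall t s, M < t -> t <= s -> Rabs (g2 s) <= C * Rabs (g2 t)) /\
  (forall h : R -> R, littleo_t h -> bigO_inf (fun t => g2 (t + h t)) g2) /\
  alpha > beta + 1 /\ beta >= 0 /\ gamma + 2 + beta - alpha > 0.

Definition thm11_solution (f g : R -> R) (alpha beta gamma lam : R) (u : R -> R) : Prop :=
  let theta := gamma + 2 + beta - alpha in
  0 < lam /\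
  (* u in C^2((0,1]) *)
  (forall r, 0 < r < 1 -> ex_derive_n u 2 r /\ continuous (Derive_n u 2) r) /\
  filterlim u (at_left 1) (locally (u 1)) /\
  (exists d1, filterlim (Derive u) (at_left 1) (locally d1)) /\
  (exists d2, filterlim (Derive_n u 2) (at_left 1) (locally d2)) /\
  (* u takes values in the domain [0,oo) of f *)
  (forall r, 0 < r <= 1 -> 0 <= u r) /\
  (forall r, 0 < r < 1 ->
     ex_derive (flux alpha beta u) r /\
     Lop alpha beta gamma u r + lam * exp (f (u r)) = 0) /\
  u 1 = 0 /\
  filterlim u (at_right 0) (Rbar_locally p_infty) /\
  (exists C : R, exists eta : R, 0 < eta /\ forall r, 0 < r < eta ->
     let tau := ln ((beta + 1) / (lam * Rpower r theta)) in
     let Z := ln (Rpower theta (beta + 1) * (alpha - beta - 1)) - ln lam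
              - theta * ln r
              + (beta + 1) * ln (Derive_n g 1 tau
                                 + (beta + 1) * Derive_n g 2 tau * ln (Derive_n g 1 tau)) in
     Rabs (u r - g Z) <= C * Rabs (Derive_n g 2 (ln (Rpower r (- theta))))).

(* Main.v *)
Require Import Defs.
From Stdlib Require Import Reals Lra Lia Ranalysis5.
From Coquelicot Require Import Coquelicot.
Open Scope R_scope.

Definition ev (P : R -> Prop) := exists M, forall t, M < t -> P t.

Lemma ev_and (P Q : R -> Prop) : ev P -> ev Q -> ev (fun t => P t /\ Q t).
Proof.
  intros [M1 H1] [M2 H2]; exists (Rmax M1 M2); intros t Ht; split;
  [apply H1 | apply H2]; pose proof (Rmax_l M1 M2); pose proof (Rmax_r M1 M2); lra.
Qed.

Lemma ev_impl (P Q : R -> Prop) : ev P -> (forall t, P t -> Q t) -> ev Q.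
Proof. intros [M H] HPQ; exists M; auto. Qed.

Lemma ev_gt a : ev (fun t => a < t).
Proof. exists a; auto. Qed.

Lemma lim_eps f (l : R) : is_lim f p_infty l <->
  forall eps, 0 < eps -> ev (fun t => Rabs (f t - l) < eps).
Proof.
  rewrite <- is_lim_spec; split.
  - intros H eps He. exact (H (mkposreal eps He)).
  - intros H [eps He]. exact (H eps He).
Qed.

Lemma lim_pinf_eps f : is_lim f p_infty p_infty <->
  forall A, ev (fun t => A < f t).
Proof.
  rewrite <- is_lim_spec; split; intros H A; exact (H A).
Qed.

Lemma lim_ext_ev f g (l : Rbar) : ev (fun t => f t = g t) -> is_lim f p_infty l -> is_lim g p_infty l.
Proof. intros H; apply is_lim_ext_loc; exact H. Qed.

Lemma lim_comp_inf f a (l : R) : is_lim f p_infty l -> is_lim a p_infty p_infty ->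
  is_lim (fun t => f (a t)) p_infty l.
Proof.
  intros Hf Ha; eapply is_lim_comp; eauto. exists 0; intros; discriminate.
Qed.

Lemma lim_mult f g (a b : R) : is_lim f p_infty a -> is_lim g p_infty b ->
  is_lim (fun t => f t * g t) p_infty (a * b).
Proof. intros H1 H2; apply (is_lim_mult f g p_infty a b H1 H2); exact I. Qed.

Lemma lim_plus f g (a b : R) : is_lim f p_infty a -> is_lim g p_infty b ->
  is_lim (fun t => f t + g t) p_infty (a + b).
Proof. intros H1 H2; eapply is_lim_plus; eauto. reflexivity. Qed.

Lemma lim_inv f (a : R) : is_lim f p_infty a -> a <> 0 ->
  is_lim (fun t => / f t) p_infty (/ a).
Proof. intros H1 H2; apply (is_lim_inv f p_infty a H1). intro E; apply H2; injection E; auto. Qed.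

Lemma lim_const (a : R) : is_lim (fun _ => a) p_infty a.
Proof. apply is_lim_const. Qed.

Lemma lim_id : is_lim (fun t => t) p_infty p_infty.
Proof. apply is_lim_id. Qed.

Lemma lim_exp0 f (a : R) : is_lim f p_infty a -> is_lim (fun t => exp (f t)) p_infty (exp a).
Proof.
  intros H; apply (is_lim_comp_continuous f exp p_infty a H).
  apply continuous_exp.
Qed.

Lemma lim_dom0 f g : ev (fun t => Rabs (f t) <= g t) -> is_lim g p_infty 0 -> is_lim f p_infty 0.
Proof.
  intros Hd Hg; apply (proj2 (lim_eps f 0)); intros eps He. pose proof (proj1 (lim_eps g 0) Hg eps He) as Hg'. clear Hg. rename Hg' into Hg. apply (ev_impl _ _ (ev_and _ _ Hd Hg)). intros t [H1 H2].
  rewrite Rminus_0_r in *. pose proof (Rle_abs (g t)). lra.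
Qed.

Lemma Rabs_le_inv2 x a : Rabs x <= a -> - a <= x <= a.
Proof.
  intros H. pose proof (Rle_abs x). pose proof (Rle_abs (- x)). rewrite Rabs_Ropp in H1. lra.
Qed.

Lemma q_lim (g1 g2 : R -> R) (a : R)
  (Hpos : forall x, a < x -> 0 < g1 x)
  (Hg2 : is_lim g2 p_infty 0)
  (Hq : is_lim (fun t => g2 t / g1 t * ln (g1 t)) p_infty 0) :
  is_lim (fun t => g2 t / g1 t) p_infty 0.
Proof.
  apply (proj2 (lim_eps _ 0)); intros eps He.
  assert (He2 : 0 < eps * exp (-1)) by (apply Rmult_lt_0_compat; [lra| apply exp_pos]).
  pose proof (proj1 (lim_eps _ 0) Hg2 _ He2) as E1.
  pose proof (proj1 (lim_eps _ 0) Hq _ He) as E2.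
  apply (ev_impl _ _ (ev_and _ _ (ev_gt a) (ev_and _ _ E1 E2))).
  intros t [Ht [H1 H2]]. rewrite Rminus_0_r in *.
  specialize (Hpos t Ht).
  destruct (Rle_lt_dec 1 (Rabs (ln (g1 t)))) as [Hl|Hl].
  - rewrite Rabs_mult in H2.
    assert (Rabs (g2 t / g1 t) <= Rabs (g2 t / g1 t) * Rabs (ln (g1 t))).
    { pose proof (Rabs_pos (g2 t / g1 t)). nra. }
    lra.
  - assert (Hg1 : exp (-1) < g1 t).
    { rewrite <- (exp_ln (g1 t)) by lra. apply exp_increasing.
      pose proof (Rle_abs (- ln (g1 t))). rewrite Rabs_Ropp in H. lra. }
    unfold Rdiv; rewrite Rabs_mult, Rabs_inv, (Rabs_pos_eq (g1 t)) by lra.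
    apply (Rmult_lt_reg_r (g1 t)); [lra|].
    rewrite Rmult_assoc, Rinv_l, Rmult_1_r by lra.
    pose proof (exp_pos (-1)).
    assert (eps * exp (-1) < eps * g1 t) by (apply Rmult_lt_compat_l; lra).
    lra.
Qed.

Lemma lnlip (g1 g2 : R -> R) (a : R)
  (Hd : forall x, a < x -> is_derive g1 x (g2 x))
  (Hpos : forall x, a < x -> 0 < g1 x)
  (Hqq : is_lim (fun t => g2 t / g1 t) p_infty 0) :
  forall eps, 0 < eps -> exists M, forall s1 s2, M < s1 -> M < s2 ->
    Rabs (ln (g1 s1) - ln (g1 s2)) <= eps * Rabs (s1 - s2).
Proof.
  intros eps He.
  destruct (proj1 (lim_eps _ 0) Hqq _ He) as [M1 HM1].
  exists (Rmax M1 a). intros s1 s2 H1 H2.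
  pose proof (Rmax_l M1 a); pose proof (Rmax_r M1 a).
  destruct (MVT_abs (fun x => ln (g1 x)) (fun x => g2 x / g1 x) s2 s1) as [c [Hc Hcr]].
  { intros c Hc. apply is_derive_Reals.
    assert (Hca : a < c).
    { destruct (Rle_dec s2 s1).
      - rewrite Rmin_left in Hc by lra. lra.
      - rewrite Rmin_right in Hc by lra. lra. }
    pose proof (Hpos c Hca).

    replace (g2 c / g1 c) with (scal (g2 c) (/ g1 c)).
    apply (is_derive_comp ln g1 c). apply is_derive_Reals, derivable_pt_lim_ln; lra.
    apply Hd; lra. reflexivity. }
  rewrite Hc.
  assert (Hca : M1 < c /\ a < c).
  { destruct (Rle_dec s2 s1).
    - rewrite Rmin_left in Hcr by lra. lra.
    - rewrite Rmin_right in Hcr by lra. lra. }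
  specialize (HM1 c (proj1 Hca)). rewrite Rminus_0_r in HM1.
  apply Rmult_le_compat_r; [apply Rabs_pos| lra].
Qed.

Lemma ln_o (g1 : R -> R)
  (Hlip : forall eps, 0 < eps -> exists M, forall s1 s2, M < s1 -> M < s2 ->
    Rabs (ln (g1 s1) - ln (g1 s2)) <= eps * Rabs (s1 - s2)) :
  is_lim (fun t => ln (g1 t) / t) p_infty 0.
Proof.
  apply (proj2 (lim_eps _ 0)); intros eps He.
  destruct (Hlip (eps/2)) as [M HM]; [lra|].
  set (t1 := Rmax M 0 + 1).
  assert (Ht1 : M < t1 /\ 0 < t1) by (unfold t1; pose proof (Rmax_l M 0); pose proof (Rmax_r M 0); lra).
  exists (Rmax t1 (4 * Rabs (ln (g1 t1)) / eps + 1)).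
  intros t Ht. pose proof (Rmax_l t1 (4 * Rabs (ln (g1 t1)) / eps + 1)).
  pose proof (Rmax_r t1 (4 * Rabs (ln (g1 t1)) / eps + 1)).
  specialize (HM t t1 ltac:(lra) (proj1 Ht1)).
  rewrite Rminus_0_r. unfold Rdiv. rewrite Rabs_mult, Rabs_inv, (Rabs_pos_eq t) by lra.
  rewrite (Rabs_pos_eq (t - t1)) in HM by lra.
  apply (Rmult_lt_reg_r t); [lra|].
  rewrite Rmult_assoc, Rinv_l, Rmult_1_r by lra.
  pose proof (Rabs_triang (ln (g1 t) - ln (g1 t1)) (ln (g1 t1))).
  replace (ln (g1 t) - ln (g1 t1) + ln (g1 t1)) with (ln (g1 t)) in H1 by ring.
  assert (4 * Rabs (ln (g1 t1)) / eps < t) by lra.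
  assert (4 * Rabs (ln (g1 t1)) < eps * t).
  { apply (Rmult_lt_compat_r eps) in H2; [|lra]. unfold Rdiv in H2.
    rewrite Rmult_assoc, Rinv_l, Rmult_1_r in H2 by lra. lra. }
  pose proof (Rabs_pos (ln (g1 t1))).
  nra.
Qed.

Lemma ratio_lim (g1 : R -> R)
  (Hpos : ev (fun x => 0 < g1 x))
  (Hlip : forall eps, 0 < eps -> exists M, forall s1 s2, M < s1 -> M < s2 ->
    Rabs (ln (g1 s1) - ln (g1 s2)) <= eps * Rabs (s1 - s2))
  (a1 a2 : R -> R) :
  is_lim a2 p_infty p_infty -> is_lim (fun t => a1 t - a2 t) p_infty 0 ->
  is_lim (fun t => g1 (a1 t) / g1 (a2 t)) p_infty 1.
Proof.
  intros H2 H12.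
  assert (H1 : is_lim a1 p_infty p_infty).
  { apply (is_lim_ext (fun t => (a1 t - a2 t) + a2 t)). intros; ring.
    eapply is_lim_plus; eauto. reflexivity. }
  assert (HD : is_lim (fun t => ln (g1 (a1 t)) - ln (g1 (a2 t))) p_infty 0).
  { apply (proj2 (lim_eps _ 0)); intros eps He.
    destruct (Hlip 1 Rlt_0_1) as [M HM].
    pose proof (proj1 (lim_eps _ 0) H12 _ He) as E.
    pose proof (proj1 (lim_pinf_eps a1) H1 M) as E1.
    pose proof (proj1 (lim_pinf_eps a2) H2 M) as E2.
    apply (ev_impl _ _ (ev_and _ _ E (ev_and _ _ E1 E2))).
    intros t [Ht [Ht1 Ht2]]. rewrite Rminus_0_r in *.
    specialize (HM _ _ Ht1 Ht2). lra. }
  destruct Hpos as [P HP].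
  pose proof (proj1 (lim_pinf_eps a1) H1 P) as [N1 HN1].
  pose proof (proj1 (lim_pinf_eps a2) H2 P) as [N2 HN2].
  pose proof (lim_exp0 _ _ HD) as HE. rewrite exp_0 in HE.
  apply (lim_ext_ev (fun t => exp (ln (g1 (a1 t)) - ln (g1 (a2 t))))); [|exact HE].
  exists (Rmax N1 N2). intros t Ht.
  pose proof (Rmax_l N1 N2); pose proof (Rmax_r N1 N2).
  pose proof (HP _ (HN1 t ltac:(lra))). pose proof (HP _ (HN2 t ltac:(lra))).
  unfold Rminus; rewrite exp_plus, exp_Ropp, !exp_ln by lra. reflexivity.
Qed.

Lemma incr_deriv (k dk : R -> R) (T0 : R)
  (Hd : forall x, T0 < x -> is_derive k x (dk x))
  (Hs : forall x, T0 < x -> 0 <= dk x) :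
  forall x y, T0 < x -> x <= y -> k x <= k y.
Proof.
  intros x y Hx Hxy. destruct (Req_dec x y) as [->|Hne]; [lra|].
  destruct (MVT_cor2 k dk x y) as [c [Hc Hcr]]; [lra| |].
  { intros c Hc. apply is_derive_Reals, Hd; lra. }
  assert (0 <= dk c * (y - x)) by (apply Rmult_le_pos; [apply Hs; lra| lra]). lra.
Qed.

Lemma mono_nonpos (k dk : R -> R) (T0 : R)
  (Hd : forall x, T0 < x -> is_derive k x (dk x))
  (Hs : forall x, T0 < x -> 0 <= dk x)
  (Hl : is_lim k p_infty 0) :
  forall x, T0 < x -> k x <= 0.
Proof.
  intros x Hx. destruct (Rle_lt_dec (k x) 0) as [|Hk]; [auto|exfalso].
  destruct (proj1 (lim_eps k 0) Hl _ Hk) as [M HM].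
  set (s := Rmax M x + 1).
  assert (M < s /\ x <= s) by (unfold s; pose proof (Rmax_l M x); pose proof (Rmax_r M x); lra).
  specialize (HM s (proj1 H)). pose proof (incr_deriv k dk T0 Hd Hs x s Hx (proj2 H)).
  rewrite Rminus_0_r in HM. pose proof (Rle_abs (k s)). lra.
Qed.

Lemma mono_nonneg (k dk : R -> R) (T0 : R)
  (Hd : forall x, T0 < x -> is_derive k x (dk x))
  (Hs : forall x, T0 < x -> dk x <= 0)
  (Hl : is_lim k p_infty 0) :
  forall x, T0 < x -> 0 <= k x.
Proof.
  intros x Hx.
  assert (- k x <= 0); [|lra].
  apply (mono_nonpos (fun x => - k x) (fun x => - dk x) T0).
  - intros y Hy. apply (is_derive_opp k y (dk y)). auto.
  - intros y Hy; specialize (Hs y Hy); lra.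
  - replace (Finite 0) with (Rbar_opp 0) by (simpl; f_equal; ring).
    apply is_lim_opp; auto.
  - auto.
Qed.

Lemma d_opp (k : R -> R) x l : is_derive k x l -> is_derive (fun y => - k y) x (- l).
Proof. intros H; apply (is_derive_opp k x l H). Qed.
Lemma d_plus (k1 k2 : R -> R) x l1 l2 : is_derive k1 x l1 -> is_derive k2 x l2 ->
  is_derive (fun y => k1 y + k2 y) x (l1 + l2).
Proof. intros H1 H2; apply (is_derive_plus k1 k2 x l1 l2 H1 H2). Qed.
Lemma d_scal (k : R -> R) c x l : is_derive k x l -> is_derive (fun y => c * k y) x (c * l).
Proof. intros H; apply (is_derive_scal k x c l H). Qed.
Lemma d_eq (k : R -> R) (x l l' : R) : is_derive k x l -> l = l' -> is_derive k x l'.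
Proof. intros H ->; auto. Qed.

Definition phih (h : R -> R) (beta s : R) := exp (- h s / (beta + 1)).
Definition Ii (h : R -> R) (beta y : R) : R := RInt (phih h beta) 0 y.

Lemma phih_cont (h : R -> R) (beta : R) (Hh : forall x, ex_derive h x) s : continuous (phih h beta) s.
Proof.
  apply (ex_derive_continuous (phih h beta)). unfold phih. auto_derive. auto.
Qed.

Lemma phih_pos h beta s : 0 < phih h beta s.
Proof. apply exp_pos. Qed.

Lemma phih_exRInt (h : R -> R) (beta : R) (Hh : forall x, ex_derive h x) a b : ex_RInt (phih h beta) a b.
Proof. apply (@ex_RInt_continuous R_CompleteNormedModule); intros; apply phih_cont; auto. Qed.

Lemma I_deriv (h : R -> R) (beta : R) (Hh : forall x, ex_derive h x) y : is_derive (Ii h beta) y (phih h beta y).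
Proof.
  apply (is_derive_RInt _ _ 0). exists (mkposreal 1 Rlt_0_1). intros; apply (@RInt_correct R_CompleteNormedModule), phih_exRInt; auto.
  apply phih_cont; auto.
Qed.

Lemma I_chasles (h : R -> R) (beta : R) (Hh : forall x, ex_derive h x) x y :
  RInt (phih h beta) x y = Ii h beta y - Ii h beta x.
Proof.
  unfold Ii. rewrite <- (RInt_Chasles (phih h beta) 0 x y) by (apply phih_exRInt; auto).
  change (plus ?a ?b) with (Rplus a b). unfold Ii. lra.
Qed.

Lemma calF_value (f h : R -> R) beta (L : R)
  (Hh : forall x, ex_derive h x) (Hfh : forall x, 0 <= x -> h x = f x)
  (HL : is_lim (Ii h beta) p_infty L) :
  forall x, 0 <= x -> calF f beta x = L - Ii h beta x.
Proof.
  intros x Hx. unfold calF. apply is_RInt_gen_unique.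
  intros P [eps HP].
  destruct (proj1 (lim_eps _ L) HL eps (cond_pos eps)) as [M HM].
  apply (Filter_prod _ _ _ (fun a => a = x) (fun b => Rmax M x < b)).
  - reflexivity.
  - exists (Rmax M x). auto.
  - intros a b -> Hb. exists (RInt (phih h beta) x b). split.
    + apply (is_RInt_ext (phih h beta)).
      * intros z Hz. unfold phih. rewrite Hfh; auto.
        pose proof (Rmin_l x b); pose proof (Rmin_r x b).
        pose proof (Rmax_r M x). idtac. simpl in Hz. rewrite Rmin_left in Hz by lra. lra.
      * apply (@RInt_correct R_CompleteNormedModule), phih_exRInt; auto.
    + apply HP. rewrite I_chasles by auto.
      pose proof (Rmax_l M x). specialize (HM b ltac:(lra)).
      change (Rabs ((Ii h beta b - Ii h beta x) - (L - Ii h beta x)) < eps).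
      replace ((Ii h beta b - Ii h beta x) - (L - Ii h beta x)) with (Ii h beta b - L) by ring.
      exact HM.
Qed.

Definition Bf (g : R -> R) (beta T : R) := (beta + 1) * exp (- T / (beta + 1)) * Derive g T.


Lemma gh (f h g : R -> R)
  (Hfh : forall x, 0 <= x -> h x = f x)
  (Hinc : forall x y, 0 <= x -> x < y -> h x < h y)
  (Hg : forall t, f 0 <= t -> 0 <= g t /\ f (g t) = t) :
  forall y, 0 <= y -> g (h y) = y.
Proof.
  intros y Hy.
  assert (H0 : f 0 <= h y).
  { rewrite <- (Hfh 0) by lra. destruct (Req_dec y 0) as [->|]; [lra|].
    left; apply Hinc; lra. }
  destruct (Hg _ H0) as [Hp He]. rewrite <- Hfh in He by auto.
  destruct (Rtotal_order (g (h y)) y) as [Hl|[Hl|Hl]]; auto.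
  - pose proof (Hinc _ _ Hp Hl). lra.
  - pose proof (Hinc _ _ Hy Hl). lra.
Qed.

Lemma hg (f h g : R -> R)
  (Hfh : forall x, 0 <= x -> h x = f x)
  (Hg : forall t, f 0 <= t -> 0 <= g t /\ f (g t) = t) :
  forall T, f 0 <= T -> h (g T) = T.
Proof. intros T HT. destruct (Hg T HT). rewrite Hfh; auto. Qed.

Lemma g_inf (f h g : R -> R)
  (Hfh : forall x, 0 <= x -> h x = f x)
  (Hinc : forall x y, 0 <= x -> x < y -> h x < h y)
  (Hg : forall t, f 0 <= t -> 0 <= g t /\ f (g t) = t) :
  is_lim g p_infty p_infty.
Proof.
  apply lim_pinf_eps. intros A.
  set (y := Rmax A 0 + 1).
  assert (Hy : A < y /\ 0 < y) by (unfold y; pose proof (Rmax_l A 0); pose proof (Rmax_r A 0); lra).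
  exists (Rmax (h y) (f 0)). intros T HT.
  pose proof (Rmax_l (h y) (f 0)); pose proof (Rmax_r (h y) (f 0)).
  destruct (Hg T ltac:(lra)) as [Hp He].
  destruct (Rlt_le_dec (g T) y) as [Hl|Hl]; [|lra].
  pose proof (Hinc _ _ Hp Hl). rewrite Hfh in H1 by auto. lra.
Qed.

Lemma J_deriv (f h g : R -> R) beta
  (Hh : forall x, ex_derive h x)
  (Hfh : forall x, 0 <= x -> h x = f x)
  (Hg : forall t, f 0 <= t -> 0 <= g t /\ f (g t) = t)
  (Hd1 : forall x, f 0 < x -> is_derive g x (Derive g x)) :
  forall T, f 0 < T -> is_derive (fun T => Ii h beta (g T)) T (exp (- T / (beta + 1)) * Derive g T).
Proof.
  intros T HT.
  replace (exp (- T / (beta + 1)) * Derive g T) with (scal (Derive g T) (phih h beta (g T))).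
  - apply (is_derive_comp (Ii h beta) g). apply I_deriv; auto. apply Hd1; auto.
  - unfold phih. rewrite (hg f h g Hfh Hg) by lra. change (scal (Derive g T) ?b) with (Derive g T * b). apply Rmult_comm.
Qed.

Lemma B_deriv (g : R -> R) beta (a : R)
  (Hb : beta >= 0)
  (Hd1 : forall x, a < x -> is_derive g x (Derive g x))
  (Hd2 : forall x, a < x -> is_derive (Derive g) x (Derive_n g 2 x)) :
  forall T, a < T -> is_derive (Bf g beta) T
    (- (exp (- T / (beta + 1)) * Derive g T) + (beta + 1) * exp (- T / (beta + 1)) * Derive_n g 2 T).
Proof.
  intros T HT. unfold Bf.
  assert (HE : is_derive (fun T => (beta + 1) * exp (- T / (beta + 1))) T (- exp (- T / (beta + 1)))).
  { auto_derive; [exact I|]. unfold Rdiv. field. lra. }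
  pose proof (is_derive_mult _ _ T _ _ HE (Hd2 T HT) ltac:(intros; apply Rmult_comm)) as HM.
  change mult with Rmult in HM. change plus with Rplus in HM.
  replace (- (exp (- T / (beta + 1)) * Derive g T) + (beta + 1) * exp (- T / (beta + 1)) * Derive_n g 2 T)
    with (- exp (- T / (beta + 1)) * Derive g T + (beta + 1) * exp (- T / (beta + 1)) * Derive_n g 2 T) by ring.
  exact HM.
Qed.

Definition Hset (f h g : R -> R) (beta : R) : Prop :=
  (forall x, ex_derive h x) /\ (forall x, 0 <= x -> h x = f x) /\
  (forall x y, 0 <= x -> x < y -> h x < h y) /\
  (forall t, f 0 <= t -> 0 <= g t /\ f (g t) = t) /\
  (forall x, f 0 < x -> is_derive g x (Derive g x)) /\
  (forall x, f 0 < x -> is_derive (Derive g) x (Derive_n g 2 x)) /\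
  (forall x, f 0 < x -> 0 < Derive g x) /\
  is_lim (fun t => Derive_n g 2 t / Derive g t) p_infty 0 /\
  is_lim (fun t => ln (Derive g t) / t) p_infty 0 /\ beta >= 0.

Lemma exp_lin_lim c : 0 < c -> is_lim (fun T => exp (- T / c)) p_infty 0.
Proof.
  intros Hc. apply (proj2 (lim_eps _ 0)). intros eps He.
  exists (- c * ln eps). intros T HT. rewrite Rminus_0_r, Rabs_pos_eq by (left; apply exp_pos).
  rewrite <- (exp_ln eps) by auto. apply exp_increasing.
  apply (Rmult_lt_reg_r c); auto. unfold Rdiv. rewrite Rmult_assoc, Rinv_l by lra. lra.
Qed.

Lemma B_pos f h g beta (H : Hset f h g beta) T : f 0 < T -> 0 < Bf g beta T.
Proof.
  destruct H as (_&_&_&_&_&_&Hpos&_&_&Hb). intros HT. unfold Bf.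
  pose proof (Hpos T HT). pose proof (exp_pos (- T / (beta + 1))).
  apply Rmult_lt_0_compat; auto. apply Rmult_lt_0_compat; auto; lra.
Qed.

Lemma B_lim0 f h g beta (H : Hset f h g beta) : is_lim (Bf g beta) p_infty 0.
Proof.
  pose proof (B_pos f h g beta H) as HBp.
  destruct H as (_&_&_&_&_&_&Hpos&_&Hlno&Hb).
  apply (lim_dom0 _ (fun T => (beta + 1) * exp (- T / (2 * (beta + 1))))).
  - assert (Hc : 0 < / (2 * (beta + 1))) by (apply Rinv_0_lt_compat; lra).
    pose proof (proj1 (lim_eps _ 0) Hlno _ Hc) as E.
    apply (ev_impl _ _ (ev_and _ _ E (ev_gt (Rmax (f 0) 0)))).
    intros T [H1 H2]. pose proof (Rmax_l (f 0) 0); pose proof (Rmax_r (f 0) 0).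
    rewrite Rabs_pos_eq by (left; apply HBp; lra).
    rewrite Rminus_0_r in H1. pose proof (Rle_abs (ln (Derive g T) / T)).
    assert (Hl : ln (Derive g T) < T / (2 * (beta + 1))).
    { apply (Rmult_lt_reg_r (/ T)). apply Rinv_0_lt_compat; lra.
      unfold Rdiv in *. rewrite (Rmult_comm T), Rmult_assoc, Rinv_r, Rmult_1_r by lra. lra. }
    unfold Bf. rewrite Rmult_assoc. apply Rmult_le_compat_l; [lra|].
    rewrite <- (exp_ln (Derive g T)) by (apply Hpos; lra). rewrite <- exp_plus.
    left; apply exp_increasing. unfold Rdiv in *.
    replace (- T * / (2 * (beta + 1))) with (- T * / (beta + 1) + T * / (2 * (beta + 1))) by (field; lra).
    lra.
  - replace (Finite 0) with (Finite ((beta + 1) * 0)) by (f_equal; ring).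
    apply lim_mult. apply lim_const. apply exp_lin_lim. lra.
Qed.

Lemma abs_div_lt a b d : 0 < b -> Rabs (a / b) < d -> Rabs a < d * b.
Proof.
  intros Hb H. unfold Rdiv in H. rewrite Rabs_mult, Rabs_inv, (Rabs_pos_eq b) in H by lra.
  apply (Rmult_lt_compat_r b) in H; auto. rewrite Rmult_assoc, Rinv_l, Rmult_1_r in H by lra. exact H.
Qed.

Lemma q_small f h g beta (H : Hset f h g beta) d : 0 < d ->
  exists T0, f 0 < T0 /\ forall T, T0 < T -> Rabs (Derive_n g 2 T) < d * Derive g T.
Proof.
  intros Hd. destruct H as (_&_&_&_&_&_&Hpos&Hqq&_&_).
  destruct (ev_and _ _ (proj1 (lim_eps _ 0) Hqq d Hd) (ev_gt (f 0))) as [M HM].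
  exists (Rmax M (f 0) + 1). split. pose proof (Rmax_r M (f 0)); lra.
  intros T HT. pose proof (Rmax_l M (f 0)); pose proof (Rmax_r M (f 0)).
  destruct (HM T ltac:(lra)) as [H1 H2]. rewrite Rminus_0_r in H1.
  apply abs_div_lt; auto.
Qed.

Lemma L_exists f h g beta (H : Hset f h g beta) : exists L : R, is_lim (Ii h beta) p_infty L.
Proof.
  pose proof (B_lim0 f h g beta H) as HB0. pose proof (B_pos f h g beta H) as HBp.
  assert (Hb : beta >= 0) by (destruct H as (_&_&_&_&_&_&_&_&_&Hb); auto).
  destruct (q_small f h g beta H (/ (2 * (beta + 1)))) as [T0 [HT0 Hq]].
  { apply Rinv_0_lt_compat; lra. }
  destruct H as (Hh&Hfh&Hinc&Hg&Hd1&Hd2&Hpos&_&_&_).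
  set (J := fun T => Ii h beta (g T)).
  assert (HJd := J_deriv f h g beta Hh Hfh Hg Hd1).
  assert (HBd := B_deriv g beta (f 0) Hb Hd1 Hd2).
  assert (Jinc : forall x y, f 0 < x -> x <= y -> J x <= J y).
  { apply (incr_deriv J (fun T => exp (- T / (beta + 1)) * Derive g T) (f 0)); auto.
    intros x Hx. left. apply Rmult_lt_0_compat; [apply exp_pos| apply Hpos; auto]. }
  assert (Kdec : forall x y, T0 < x -> x <= y -> J y + 2 * Bf g beta y <= J x + 2 * Bf g beta x).
  { intros x y Hx Hxy.
    assert (- (J x + 2 * Bf g beta x) <= - (J y + 2 * Bf g beta y)); [|lra].
    apply (incr_deriv (fun T => - (J T + 2 * Bf g beta T))
      (fun T => - (exp (- T / (beta + 1)) * Derive g T + 2 * (- (exp (- T / (beta + 1)) * Derive g T) + (beta + 1) * exp (- T / (beta + 1)) * Derive_n g 2 T))) T0); auto.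
    - intros T HT. apply d_opp. apply d_plus. apply HJd; lra.
      apply d_scal. apply HBd; lra.
    - intros T HT. specialize (Hq T HT). pose proof (exp_pos (- T / (beta + 1))).
      pose proof (Rle_abs (Derive_n g 2 T)).
      assert (2 * (beta + 1) * Derive_n g 2 T <= Derive g T).
      { assert (Derive_n g 2 T < / (2 * (beta + 1)) * Derive g T) by lra.
        apply (Rmult_lt_compat_l (2 * (beta + 1))) in H1; [|lra].
        rewrite <- Rmult_assoc, Rinv_r, Rmult_1_l in H1 by lra. lra. }
      set (E := exp (- T / (beta + 1))) in *. nra. }
  assert (Hc : exists y : R_CompleteSpace, filterlim (Ii h beta) (Rbar_locally p_infty) (locally y)).
  2:{ destruct Hc as [y Hy]; exists y; exact Hy. }
  apply (proj1 (filterlim_locally_cauchy (U := R_CompleteSpace) (F := Rbar_locally p_infty) (Ii h beta))).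
  intros eps.
  destruct (ev_and _ _ (proj1 (lim_eps _ 0) HB0 (eps / 2) ltac:(destruct eps; simpl; lra)) (ev_gt T0)) as [M HM].
  set (T1 := Rmax M T0 + 1).
  assert (HT1 : M < T1 /\ T0 < T1) by (unfold T1; pose proof (Rmax_l M T0); pose proof (Rmax_r M T0); lra).
  destruct (HM T1 (proj1 HT1)) as [HB1 _]. rewrite Rminus_0_r in HB1.
  assert (Hgp : 0 <= g T1 /\ f (g T1) = T1) by (apply Hg; lra).
  assert (Hhg : h (g T1) = T1) by (rewrite Hfh; tauto).
  assert (Hin : forall y, g T1 < y -> J T1 <= Ii h beta y <= J T1 + 2 * Bf g beta T1).
  { intros y Hy. pose proof (Hinc _ _ (proj1 Hgp) Hy) as Hhy. rewrite Hhg in Hhy.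
    replace (Ii h beta y) with (J (h y)) by (unfold J; rewrite (gh f h g Hfh Hinc Hg); auto; lra).
    split. apply Jinc; lra.
    pose proof (Kdec T1 (h y) (proj2 HT1) ltac:(lra)).
    pose proof (HBp (h y) ltac:(lra)). lra. }
  exists (fun y => g T1 < y). split. exists (g T1). auto.
  intros u v Hu Hv. pose proof (Hin u Hu). pose proof (Hin v Hv).
  change (Rabs (Ii h beta v - Ii h beta u) < eps).
  rewrite Rabs_pos_eq in HB1 by (left; apply HBp; lra).
  apply Rabs_def1; lra.
Qed.

Lemma AB f h g beta (H : Hset f h g beta) :
  is_lim (fun T => calF f beta (g T) / Bf g beta T) p_infty 1.
Proof.
  destruct (L_exists f h g beta H) as [L HL].
  pose proof (B_lim0 f h g beta H) as HB0. pose proof (B_pos f h g beta H) as HBp.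
  pose proof H as H'.
  destruct H' as (Hh&Hfh&Hinc&Hg&Hd1&Hd2&Hpos&_&_&Hb).
  assert (HJ : is_lim (fun T => Ii h beta (g T)) p_infty L).
  { apply lim_comp_inf; auto. apply (g_inf f h g); auto. }
  assert (HA0 : is_lim (fun T => L - Ii h beta (g T)) p_infty 0).
  { replace (Finite 0) with (Finite (L + - L)) by (f_equal; ring).
    apply lim_plus. apply lim_const. replace (Finite (- L)) with (Rbar_opp L) by reflexivity.
    apply (is_lim_opp (fun T => Ii h beta (g T))). auto. }
  assert (HJd := J_deriv f h g beta Hh Hfh Hg Hd1).
  assert (HBd := B_deriv g beta (f 0) Hb Hd1 Hd2).
  apply (proj2 (lim_eps _ 1)); intros eps He.
  set (e := Rmin (eps / 2) (1 / 2)).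
  assert (He1 : 0 < e /\ e <= 1/2 /\ e < eps).
  { unfold e. pose proof (Rmin_l (eps/2) (1/2)); pose proof (Rmin_r (eps/2) (1/2)).
    split; [apply Rmin_glb_lt; lra| lra]. }
  destruct (q_small f h g beta H (e / ((1 + e) * (beta + 1)))) as [T0 [HT0 Hq]].
  { apply Rdiv_lt_0_compat; [lra|]. apply Rmult_lt_0_compat; lra. }
  assert (Hq' : forall T, T0 < T -> (1 + e) * (beta + 1) * Rabs (Derive_n g 2 T) <= e * Derive g T).
  { intros T HT. specialize (Hq T HT).
    apply (Rmult_lt_compat_l ((1 + e) * (beta + 1))) in Hq; [|apply Rmult_lt_0_compat; lra].
    replace ((1 + e) * (beta + 1) * (e / ((1 + e) * (beta + 1)) * Derive g T)) with (e * Derive g T) in Hq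
      by (field; lra). lra. }
  set (dk := fun (c T : R) => - (exp (- T / (beta + 1)) * Derive g T) - c * (- (exp (- T / (beta + 1)) * Derive g T) + (beta + 1) * exp (- T / (beta + 1)) * Derive_n g 2 T)).
  assert (Hkd : forall c T, f 0 < T -> is_derive (fun T => (L - Ii h beta (g T)) - c * Bf g beta T) T (dk c T)).
  { intros c T HT. unfold Rminus. eapply d_eq.
    - apply d_plus. apply d_plus.
      apply (is_derive_const (V := R_NormedModule)). apply d_opp; auto.
      apply d_opp, d_scal. auto.
    - unfold dk. change (zero : R_NormedModule) with 0. ring. }
  assert (Hkl : forall c, is_lim (fun T => (L - Ii h beta (g T)) - c * Bf g beta T) p_infty 0).
  { intros c. replace (Finite 0) with (Finite (0 + - (c * 0))) by (f_equal; ring).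
    unfold Rminus at 2. apply lim_plus; auto.
    replace (Finite (- (c * 0))) with (Rbar_opp (c * 0)) by reflexivity.
    apply (is_lim_opp (fun T => c * Bf g beta T)). apply lim_mult; auto. apply lim_const. }
  assert (Hup : forall T, T0 < T -> (L - Ii h beta (g T)) - (1 + e) * Bf g beta T <= 0).
  { apply (mono_nonpos _ (dk (1 + e)) T0); auto.
    - intros T HT; apply Hkd; lra.
    - intros T HT. unfold dk. specialize (Hq' T HT). pose proof (Rle_abs (Derive_n g 2 T)).
      pose proof (exp_pos (- T / (beta + 1))).
      replace (- (exp (- T / (beta + 1)) * Derive g T) - (1 + e) * (- (exp (- T / (beta + 1)) * Derive g T) + (beta + 1) * exp (- T / (beta + 1)) * Derive_n g 2 T))
        with (exp (- T / (beta + 1)) * (e * Derive g T - (1 + e) * (beta + 1) * Derive_n g 2 T)) by ring.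
      apply Rmult_le_pos; [lra|]. assert ((1 + e) * (beta + 1) * Derive_n g 2 T <= (1 + e) * (beta + 1) * Rabs (Derive_n g 2 T)).
      { apply Rmult_le_compat_l; auto. apply Rmult_le_pos; lra. } lra. }
  assert (Hlo : forall T, T0 < T -> 0 <= (L - Ii h beta (g T)) - (1 - e) * Bf g beta T).
  { apply (mono_nonneg _ (dk (1 - e)) T0); auto.
    - intros T HT; apply Hkd; lra.
    - intros T HT. unfold dk. specialize (Hq' T HT). pose proof (Rle_abs (- Derive_n g 2 T)).
      rewrite Rabs_Ropp in H0.
      pose proof (exp_pos (- T / (beta + 1))).
      replace (- (exp (- T / (beta + 1)) * Derive g T) - (1 - e) * (- (exp (- T / (beta + 1)) * Derive g T) + (beta + 1) * exp (- T / (beta + 1)) * Derive_n g 2 T))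
        with (- (exp (- T / (beta + 1)) * (e * Derive g T + (1 - e) * (beta + 1) * Derive_n g 2 T))) by ring.
      cut (0 <= exp (- T / (beta + 1)) * (e * Derive g T + (1 - e) * (beta + 1) * Derive_n g 2 T)); [lra|].
      apply Rmult_le_pos; [lra|].
      assert (- ((1 - e) * (beta + 1) * Derive_n g 2 T) <= (1 - e) * (beta + 1) * Rabs (Derive_n g 2 T)).
      { replace (- ((1 - e) * (beta + 1) * Derive_n g 2 T)) with ((1 - e) * (beta + 1) * (- Derive_n g 2 T)) by ring.
        apply Rmult_le_compat_l; auto. apply Rmult_le_pos; lra. }
      assert ((1 - e) * (beta + 1) * Rabs (Derive_n g 2 T) <= (1 + e) * (beta + 1) * Rabs (Derive_n g 2 T)).
      { apply Rmult_le_compat_r. apply Rabs_pos. apply Rmult_le_compat_r; lra. }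
      lra. }
  exists T0. intros T HT.
  specialize (Hup T HT). specialize (Hlo T HT). specialize (HBp T ltac:(lra)).
  destruct (Hg T ltac:(lra)) as [Hgp _].
  rewrite (calF_value f h beta L Hh Hfh HL (g T) Hgp).
  set (A := L - Ii h beta (g T)) in *. set (B := Bf g beta T) in *.
  assert (A / B - 1 <= e /\ - e <= A / B - 1); [|apply Rabs_def1; lra].
  replace (A / B - 1) with ((A - B) / B) by (field; lra).
  split.
  - apply (Rmult_le_reg_r B); auto. unfold Rdiv; rewrite Rmult_assoc, Rinv_l by lra. lra.
  - apply (Rmult_le_reg_r B); auto. unfold Rdiv; rewrite Rmult_assoc, Rinv_l by lra. lra.
Qed.

Lemma h_incr (h : R -> R) (Hh : forall x, ex_derive h x) (Hp : forall x, 0 <= x -> 0 < Derive h x) :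
  forall x y, 0 <= x -> x < y -> h x < h y.
Proof.
  intros x y Hx Hxy.
  destruct (MVT_cor2 h (Derive h) x y Hxy) as [c [Hc Hcr]].
  { intros c Hc. apply is_derive_Reals, Derive_correct, Hh. }
  assert (0 < Derive h c * (y - x)) by (apply Rmult_lt_0_compat; [apply Hp; lra|lra]). lra.
Qed.

Lemma g_is_derive (f h g : R -> R)
  (Hh : forall x, ex_derive h x) (Hp : forall x, 0 <= x -> 0 < Derive h x)
  (Hfh : forall x, 0 <= x -> h x = f x)
  (Hg : forall t, f 0 <= t -> 0 <= g t /\ f (g t) = t) :
  forall x, f 0 < x -> is_derive g x (/ Derive h (g x)).
Proof.
  intros x Hx.
  pose proof (h_incr h Hh Hp) as Hinc.
  assert (Hhg : forall t, f 0 <= t -> h (g t) = t) by (intros; apply (hg f h g); auto).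
  assert (Hgh := gh f h g Hfh Hinc Hg).
  assert (Hgmono : forall y z, f 0 <= y -> y <= z -> g y <= g z).
  { intros y z Hy Hyz. destruct (Rle_lt_dec (g y) (g z)) as [|Hl]; auto.
    pose proof (Hinc _ _ (proj1 (Hg z ltac:(lra))) Hl). rewrite !Hhg in H by lra. lra. }
  assert (Hhd : forall a, derivable_pt h a) by (intros; apply ex_derive_Reals_0, Hh).
  assert (Hcont : continuity_pt g x).
  { set (ub := g (x + 1)).
    assert (Hub : 0 < ub).
    { destruct (Hg (x + 1) ltac:(lra)) as [H1 H2]. destruct H1 as [|H1]; auto.
      unfold ub; rewrite <- H1 in H2. lra. }
    apply (continuity_pt_recip_interv h g 0 ub Hub).
    - intros y z Hy Hyz Hz. apply Hinc; lra.
    - intros y Hy1 Hy2. unfold comp, id. apply Hhg. rewrite Hfh in Hy1 by lra. lra.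
    - intros y Hy1 Hy2. rewrite Hfh in Hy1 by lra. unfold ub in Hy2.
      rewrite Hhg in Hy2 by lra. split. apply Hg; lra. apply Hgmono; lra.
    - intros a _. apply continuity_pt_filterlim. apply (ex_derive_continuous h), Hh.
    - rewrite Hfh by lra. unfold ub. rewrite Hhg by lra. lra. }
  assert (Hgi : g (f 0) <= g x <= g (x + 1)) by (split; apply Hgmono; lra).
  pose proof (derivable_pt_lim_recip_interv h g (f 0) (x + 1) x (fun a _ => Hhd a) Hcont
    ltac:(lra) ltac:(lra) Hgi) as HD.
  assert (HD2 : derive_pt h (g x) (Hhd (g x)) <> 0 -> derivable_pt_lim g x (1 / derive_pt h (g x) (Hhd (g x)))).
  { apply HD. intros y Hy. unfold comp, id. apply Hhg. lra. }
  rewrite Derive_Reals in HD2.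
  apply is_derive_Reals. replace (/ Derive h (g x)) with (1 / Derive h (g x)) by (unfold Rdiv; ring).
  apply HD2. assert (0 < Derive h (g x)) by (apply Hp, Hg; lra). lra.
Qed.

Lemma build_Hset f g alpha beta gamma
  (Hg : forall t, f 0 <= t -> 0 <= g t /\ f (g t) = t)
  (HA : hypA f g alpha beta gamma) : exists h, Hset f h g beta.
Proof.
  unfold hypA in HA. cbv zeta in HA.
  destruct HA as (HC4 & Hfinf & HA2 & HA2b & HA3 & HA4 & HA5a & HA5a' & HA5b & HA5b' & Hal & Hb & Hth).
  destruct HC4 as [h (Hfh & Hder & Hcont & Hp)].
  assert (Hh : forall x, ex_derive h x) by (intros x; exact (Hder x 1%nat ltac:(lia))).
  assert (Hh2 : forall x, ex_derive (Derive h) x) by (intros x; exact (Hder x 2%nat ltac:(lia))).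
  pose proof (h_incr h Hh Hp) as Hinc.
  assert (Hdg : forall x, f 0 < x -> is_derive g x (/ Derive h (g x))) by (apply g_is_derive; auto).
  assert (HDg : forall x, f 0 < x -> Derive g x = / Derive h (g x)) by (intros; apply is_derive_unique; auto).
  assert (Hpos : forall x, f 0 < x -> 0 < Derive g x).
  { intros x Hx. rewrite HDg by auto. apply Rinv_0_lt_compat, Hp, Hg; lra. }
  assert (Hd1 : forall x, f 0 < x -> is_derive g x (Derive g x)) by (intros; rewrite HDg; auto).
  assert (Hd2 : forall x, f 0 < x -> is_derive (Derive g) x (Derive_n g 2 x)).
  { intros x Hx. change (is_derive (Derive g) x (Derive (Derive g) x)). apply Derive_correct.
    apply (ex_derive_ext_loc (fun y => / Derive h (g y))).
    - assert (He : 0 < x - f 0) by lra. exists (mkposreal _ He). intros y Hy.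
      change (Rabs (y - x) < x - f 0) in Hy. pose proof (Rle_abs (x - y)).
      rewrite Rabs_minus_sym in Hy. rewrite HDg; auto. lra.
    - apply ex_derive_inv. apply (ex_derive_comp (Derive h) g). apply Hh2.
      exists (/ Derive h (g x)); auto.
      assert (0 < Derive h (g x)) by (apply Hp, Hg; lra). lra. }
  assert (Hqq : is_lim (fun t => Derive_n g 2 t / Derive g t) p_infty 0).
  { apply (q_lim (Derive g) (Derive_n g 2) (f 0)); auto. }
  exists h. refine (conj Hh (conj Hfh (conj Hinc (conj Hg (conj Hd1 (conj Hd2 (conj Hpos (conj Hqq (conj _ Hb))))))))).
  apply ln_o. apply (lnlip (Derive g) (Derive_n g 2) (f 0)); auto.
Qed.

Lemma lim_inv_id : is_lim (fun t => / t) p_infty 0.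
Proof.
  pose proof (is_lim_inv (fun t => t) p_infty p_infty (is_lim_id _) ltac:(discriminate)). exact H.
Qed.

Lemma lim_shift (phi : R -> R) (l : R) c : is_lim phi p_infty l -> is_lim (fun t => phi (t + c)) p_infty l.
Proof.
  intros H. apply (lim_comp_inf phi (fun t => t + c)); auto.
  apply lim_pinf_eps. intros A. exists (A - c). intros; lra.
Qed.

Lemma lim_ln (phi : R -> R) (l : R) : is_lim phi p_infty l -> 0 < l -> is_lim (fun t => ln (phi t)) p_infty (ln l).
Proof. intros H Hl. apply (is_lim_comp_continuous phi ln p_infty l H). apply continuous_ln; auto. Qed.

Lemma lim_abs0 (phi : R -> R) : is_lim phi p_infty 0 -> is_lim (fun t => Rabs (phi t)) p_infty 0.
Proof.
  intros H. apply (proj2 (lim_eps _ 0)); intros eps He.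
  apply (ev_impl _ _ (proj1 (lim_eps _ 0) H eps He)). intros t Ht.
  rewrite Rminus_0_r in *. rewrite Rabs_Rabsolu. auto.
Qed.

Lemma lim_pinf_ev (phi psi : R -> R) : ev (fun t => psi t <= phi t) -> is_lim psi p_infty p_infty -> is_lim phi p_infty p_infty.
Proof.
  intros [M HM] Hp. apply lim_pinf_eps. intros A.
  destruct (proj1 (lim_pinf_eps psi) Hp A) as [N HN]. exists (Rmax M N). intros t Ht.
  pose proof (Rmax_l M N); pose proof (Rmax_r M N). specialize (HM t ltac:(lra)). specialize (HN t ltac:(lra)). lra.
Qed.

Lemma littleo_of (hh : R -> R) : is_lim (fun t => hh t / t) p_infty 0 -> littleo_t hh.
Proof. auto. Qed.

Definition Gf (g : R -> R) (beta s : R) := Derive g s + (beta + 1) * Derive_n g 2 s * ln (Derive g s).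

Lemma G_ratio f h g beta (H : Hset f h g beta)
  (HA4 : is_lim (fun t => Derive_n g 2 t / Derive g t * ln (Derive g t)) p_infty 0) :
  is_lim (fun s => Gf g beta s / Derive g s) p_infty 1.
Proof.
  destruct H as (_&_&_&_&_&_&Hpos&_&_&_).
  apply (lim_ext_ev (fun s => 1 + (beta + 1) * (Derive_n g 2 s / Derive g s * ln (Derive g s)))).
  - exists (f 0). intros t Ht. specialize (Hpos t Ht). unfold Gf. field. lra.
  - replace (Finite 1) with (Finite (1 + (beta + 1) * 0)) by (f_equal; ring).
    apply lim_plus. apply lim_const. apply lim_mult; auto. apply lim_const.
Qed.

Lemma G_pos f h g beta (H : Hset f h g beta)
  (HA4 : is_lim (fun t => Derive_n g 2 t / Derive g t * ln (Derive g t)) p_infty 0) :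
  ev (fun s => 0 < Gf g beta s).
Proof.
  pose proof (G_ratio f h g beta H HA4) as HG.
  destruct H as (_&_&_&_&_&_&Hpos&_&_&_).
  apply (ev_impl _ _ (ev_and _ _ (proj1 (lim_eps _ 1) HG (1/2) ltac:(lra)) (ev_gt (f 0)))).
  intros t [H1 H2]. specialize (Hpos t H2).
  assert (0 < Gf g beta t / Derive g t) by (apply Rabs_def2 in H1; lra).
  replace (Gf g beta t) with (Gf g beta t / Derive g t * Derive g t) by (field; lra).
  apply Rmult_lt_0_compat; auto.
Qed.

Lemma lnG_o f h g beta (H : Hset f h g beta)
  (HA4 : is_lim (fun t => Derive_n g 2 t / Derive g t * ln (Derive g t)) p_infty 0) :
  is_lim (fun s => ln (Gf g beta s) / s) p_infty 0.
Proof.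
  pose proof (G_ratio f h g beta H HA4) as HG. pose proof (G_pos f h g beta H HA4) as HGp.
  pose proof H as H'. destruct H' as (_&_&_&_&_&_&Hpos&_&Hlno&_).
  apply (lim_ext_ev (fun s => ln (Derive g s) / s + ln (Gf g beta s / Derive g s) * / s)).
  - apply (ev_impl _ _ (ev_and _ _ HGp (ev_gt (Rmax (f 0) 0)))). intros t [H1 H2].
    pose proof (Rmax_l (f 0) 0); pose proof (Rmax_r (f 0) 0).
    specialize (Hpos t ltac:(lra)).
    rewrite ln_div by auto. field. lra.
  - replace (Finite 0) with (Finite (0 + ln 1 * 0)) by (rewrite ln_1; f_equal; ring).
    apply lim_plus; auto. apply lim_mult. apply lim_ln; auto; lra. apply lim_inv_id.
Qed.

Lemma w_close f h g beta (H : Hset f h g beta) (Z U : R -> R)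
  (HZ : is_lim Z p_infty p_infty) (HU0 : ev (fun t => 0 <= U t))
  (He : is_lim (fun t => (U t - g (Z t)) / Derive g (Z t)) p_infty 0) :
  is_lim (fun t => h (U t) - Z t) p_infty 0.
Proof.
  destruct H as (Hh&Hfh&Hinc&Hg&Hd1&Hd2&Hpos&Hqq&_&_).
  destruct (lnlip (Derive g) (Derive_n g 2) (f 0) Hd2 Hpos Hqq 1 Rlt_0_1) as [M HM].
  assert (Hloc : forall c z, Rmax M (f 0) < c -> Rmax M (f 0) < z -> Rabs (c - z) <= 1 ->
     exp (-1) * Derive g z <= Derive g c).
  { intros c z Hc Hz Hcz. pose proof (Rmax_l M (f 0)); pose proof (Rmax_r M (f 0)).
    specialize (HM c z ltac:(lra) ltac:(lra)).
    pose proof (Hpos c ltac:(lra)); pose proof (Hpos z ltac:(lra)).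
    rewrite <- (exp_ln (Derive g z)) at 1 by lra. rewrite <- (exp_ln (Derive g c)) by lra.
    rewrite <- exp_plus. destruct (Req_dec (-1 + ln (Derive g z)) (ln (Derive g c))) as [E|E].
    rewrite E; lra. left; apply exp_increasing.
    apply Rabs_le_inv2 in HM. lra. }
  assert (Hhg : forall T, f 0 <= T -> h (g T) = T) by (intros; apply (hg f h g); auto).
  apply (proj2 (lim_eps _ 0)); intros eps Heps.
  set (d := Rmin (eps / 2) 1).
  assert (Hd : 0 < d /\ d <= 1 /\ d < eps).
  { unfold d. pose proof (Rmin_l (eps/2) 1); pose proof (Rmin_r (eps/2) 1).
    split; [apply Rmin_glb_lt; lra| lra]. }
  assert (Hde : 0 < d * exp (-1)) by (apply Rmult_lt_0_compat; [lra|apply exp_pos]).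
  pose proof (proj1 (lim_eps _ 0) He _ Hde) as E1.
  pose proof (proj1 (lim_pinf_eps Z) HZ (Rmax M (f 0) + 2)) as E2.
  apply (ev_impl _ _ (ev_and _ _ E1 (ev_and _ _ E2 HU0))).
  intros t [H1 [H2 H3]]. rewrite Rminus_0_r in *.
  set (z := Z t) in *. pose proof (Rmax_l M (f 0)); pose proof (Rmax_r M (f 0)).
  pose proof (Hpos z ltac:(lra)) as Hgz.
  assert (Heps' : Rabs (U t - g z) < d * exp (-1) * Derive g z).
  { unfold Rdiv in H1. rewrite Rabs_mult, Rabs_inv, (Rabs_pos_eq (Derive g z)) in H1 by lra.
    apply (Rmult_lt_compat_r (Derive g z)) in H1; auto.
    rewrite Rmult_assoc, Rinv_l, Rmult_1_r in H1 by lra. exact H1. }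
  assert (Hderiv : forall c, f 0 < c -> derivable_pt_lim g c (Derive g c)).
  { intros c Hc; apply is_derive_Reals, Hd1; auto. }
  destruct (MVT_cor2 g (Derive g) z (z + d)) as [c [Hc Hcr]]; [lra| intros; apply Hderiv; lra |].
  destruct (MVT_cor2 g (Derive g) (z - d) z) as [c' [Hc' Hcr']]; [lra| intros; apply Hderiv; lra |].
  pose proof (Hloc c z ltac:(lra) ltac:(lra) ltac:(apply Rabs_le; lra)) as L1.
  pose proof (Hloc c' z ltac:(lra) ltac:(lra) ltac:(apply Rabs_le; lra)) as L2.
  assert (U t < g (z + d)).
  { apply Rabs_def2 in Heps'. assert (d * (exp (-1) * Derive g z) <= d * Derive g c) by (apply Rmult_le_compat_l; lra).
    replace (z + d - z) with d in Hc by ring. lra. }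
  assert (g (z - d) < U t).
  { apply Rabs_def2 in Heps'. assert (d * (exp (-1) * Derive g z) <= d * Derive g c') by (apply Rmult_le_compat_l; lra).
    replace (z - (z - d)) with d in Hc' by ring. lra. }
  pose proof (Hinc _ _ H3 H4). rewrite Hhg in H6 by lra.
  pose proof (Hinc _ _ (proj1 (Hg (z - d) ltac:(lra))) H5). rewrite Hhg in H7 by lra.
  apply Rabs_def1; lra.
Qed.

Lemma core f h g beta (H : Hset f h g beta)
  (HA3 : forall hh : R -> R, littleo_t hh -> is_lim (fun t => Derive g t / Derive g (t + hh t)) p_infty 1)
  (HA4 : is_lim (fun t => Derive_n g 2 t / Derive g t * ln (Derive g t)) p_infty 0)
  (c1 c2 C : R) (U : R -> R)
  (HU : ev (fun t => 0 <= U t /\ Rabs (U t - g (c1 + t + (beta + 1) * ln (Gf g beta (t + c2)))) <= C * Rabs (Derive_n g 2 t))) :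
  is_lim (fun t => calF f beta (U t) / ((beta + 1) * exp (- (c1 + t) / (beta + 1)))) p_infty 1.
Proof.
  pose proof (lnG_o f h g beta H HA4) as HlnG.
  pose proof (G_pos f h g beta H HA4) as HGp.
  pose proof (G_ratio f h g beta H HA4) as HGr.
  pose proof (AB f h g beta H) as HAB.
  pose proof H as H'. destruct H' as (Hh&Hfh&Hinc&Hg&Hd1&Hd2&Hpos&Hqq&Hlno&Hb).
  pose proof (lnlip (Derive g) (Derive_n g 2) (f 0) Hd2 Hpos Hqq) as Hlip.
  assert (Hpev : ev (fun x => 0 < Derive g x)) by (exists (f 0); auto).
  set (b := beta + 1) in *.
  assert (Hbpos : 0 < b) by (unfold b; lra).
  set (Z := fun t => c1 + t + b * ln (Gf g beta (t + c2))).
  assert (S1 : is_lim (fun t => Derive g (t + c2) / Derive g (Z t)) p_infty 1).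
  { assert (Hl : littleo_t (fun s => c1 - c2 + b * ln (Gf g beta s))).
    { unfold littleo_t. apply (lim_ext_ev (fun s => (c1 - c2) * / s + b * (ln (Gf g beta s) / s))).
      - exists 0. intros t Ht. field. lra.
      - replace (Finite 0) with (Finite ((c1 - c2) * 0 + b * 0)) by (f_equal; ring).
        apply lim_plus; apply lim_mult; auto using lim_const, lim_inv_id. }
    pose proof (lim_shift _ _ c2 (HA3 _ Hl)) as HS.
    refine (lim_ext_ev _ _ _ _ HS). exists 0. intros t _. cbv beta. unfold Z. f_equal. f_equal. ring. }
  assert (Hh2 : littleo_t (fun t => c1 + b * ln (Gf g beta (t + c2)))).
  { unfold littleo_t.
    apply (lim_ext_ev (fun t => c1 * / t + b * (ln (Gf g beta (t + c2)) / (t + c2)) * (1 + c2 * / t))).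
    - exists (Rabs c2 + 1). intros t Ht. pose proof (Rle_abs (- c2)). rewrite Rabs_Ropp in H0.
      pose proof (Rabs_pos c2). field. split; lra.
    - replace (Finite 0) with (Finite (c1 * 0 + b * 0 * (1 + c2 * 0))) by (f_equal; ring).
      apply lim_plus. apply lim_mult; auto using lim_const, lim_inv_id.
      apply lim_mult. apply lim_mult. apply lim_const. apply (lim_shift (fun s => ln (Gf g beta s) / s)); auto.
      apply lim_plus. apply lim_const. apply lim_mult. apply lim_const. apply lim_inv_id. }
  assert (S2 : is_lim (fun t => Derive g t / Derive g (Z t)) p_infty 1).
  { refine (lim_ext_ev _ _ _ _ (HA3 _ Hh2)). exists 0. intros t _. cbv beta. unfold Z. f_equal. f_equal. ring. }
  assert (S3 : is_lim Z p_infty p_infty).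
  { apply (lim_pinf_ev _ (fun t => t / 2)).
    - apply (ev_impl _ _ (ev_and _ _ (proj1 (lim_eps _ 0) Hh2 (1/2) ltac:(lra)) (ev_gt 0))).
      intros t [H1 H2]. rewrite Rminus_0_r in H1. apply Rabs_def2 in H1.
      unfold Rdiv in H1. destruct H1 as [_ H1].
      apply (Rmult_lt_compat_r t) in H1; auto. rewrite Rmult_assoc, Rinv_l, Rmult_1_r in H1 by lra.
      unfold Z. lra.
    - apply lim_pinf_eps. intros A. exists (2 * A). intros; lra. }
  assert (S4 : is_lim (fun t => (U t - g (Z t)) / Derive g (Z t)) p_infty 0).
  { apply (lim_dom0 _ (fun t => Rabs C * Rabs (Derive_n g 2 t / Derive g t) * (Derive g t / Derive g (Z t)))).
    - pose proof (proj1 (lim_pinf_eps Z) S3 (f 0)) as EZ.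
      apply (ev_impl _ _ (ev_and _ _ HU (ev_and _ _ EZ (ev_gt (f 0))))).
      intros t [[HU0 HU1] [HZ Ht]]. specialize (Hpos _ HZ) as HpZ. specialize (Hpos _ Ht).
      unfold Rdiv. rewrite Rabs_mult, Rabs_mult, Rabs_inv, Rabs_inv, (Rabs_pos_eq (Derive g (Z t))),
        (Rabs_pos_eq (Derive g t)) by lra.
      replace (Rabs C * (Rabs (Derive_n g 2 t) * / Derive g t) * (Derive g t * / Derive g (Z t)))
        with (Rabs C * Rabs (Derive_n g 2 t) * / Derive g (Z t)) by (field; lra).
      apply Rmult_le_compat_r. left; apply Rinv_0_lt_compat; lra.
      pose proof (Rle_abs C). pose proof (Rabs_pos (Derive_n g 2 t)).
      change (Rabs (U t - g (Z t)) <= C * Rabs (Derive_n g 2 t)) in HU1. assert (C * Rabs (Derive_n g 2 t) <= Rabs C * Rabs (Derive_n g 2 t)) by (apply Rmult_le_compat_r; lra).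
      lra.
    - replace (Finite 0) with (Finite (Rabs C * 0 * 1)) by (f_equal; ring).
      apply lim_mult; auto. apply lim_mult. apply lim_const. apply lim_abs0; auto. }
  set (w := fun t => h (U t)).
  assert (S5 : is_lim (fun t => w t - Z t) p_infty 0).
  { apply (w_close f h g beta H Z U S3); auto. apply (ev_impl _ _ HU); tauto. }
  assert (HUw : ev (fun t => g (w t) = U t)).
  { apply (ev_impl _ _ HU). intros t [H0 _]. apply (gh f h g); auto. }
  assert (S7 : is_lim w p_infty p_infty).
  { apply (lim_ext_ev (fun t => (w t - Z t) + Z t)). exists 0; intros; ring.
    eapply is_lim_plus; eauto. reflexivity. }
  assert (S6 : is_lim (fun t => Derive g (w t) / Derive g (Z t)) p_infty 1).
  { apply ratio_lim; auto. }
  assert (S8 : is_lim (fun t => calF f beta (U t) / Bf g beta (w t)) p_infty 1).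
  { apply (lim_ext_ev (fun t => calF f beta (g (w t)) / Bf g beta (w t))).
    apply (ev_impl _ _ HUw). intros t E; rewrite E; auto.
    apply (lim_comp_inf (fun T => calF f beta (g T) / Bf g beta T) w); auto. }
  assert (S9 : is_lim (fun t => Bf g beta (w t) / Bf g beta (Z t)) p_infty 1).
  { apply (lim_ext_ev (fun t => exp (- (w t - Z t) / b) * (Derive g (w t) / Derive g (Z t)))).
    - pose proof (proj1 (lim_pinf_eps Z) S3 (f 0)) as EZ.
      apply (ev_impl _ _ EZ). intros t Ht. specialize (Hpos _ Ht). unfold Bf. fold b.
      unfold Rminus, Rdiv. rewrite Ropp_plus_distr, Rmult_plus_distr_r, exp_plus.
      replace (- - Z t * / b) with (- (- Z t * / b)) by ring. rewrite exp_Ropp.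
      pose proof (exp_pos (- Z t * / b)). pose proof (exp_pos (- w t * / b)). field.
      repeat split; lra.
    - replace (Finite 1) with (Finite (exp (- 0 / b) * 1)) by (f_equal; rewrite Ropp_0; unfold Rdiv; rewrite Rmult_0_l, exp_0; ring).
      apply lim_mult; auto. apply lim_exp0. unfold Rdiv.
      apply lim_mult. replace (Finite (-0)) with (Rbar_opp 0) by reflexivity.
      apply (is_lim_opp (fun t => w t - Z t)). auto. apply lim_const. }
  assert (S10 : is_lim (fun t => Bf g beta (Z t) / (b * exp (- (c1 + t) / b))) p_infty 1).
  { apply (lim_ext_ev (fun t => / (Derive g (t + c2) / Derive g (Z t)) * / (Gf g beta (t + c2) / Derive g (t + c2)))).
    - pose proof (proj1 (lim_pinf_eps Z) S3 (f 0)) as EZ.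
      destruct HGp as [MG HMG].
      apply (ev_impl _ _ (ev_and _ _ EZ (ev_gt (Rmax (f 0) MG - c2)))). intros t [Ht Ht2].
      pose proof (Rmax_l (f 0) MG); pose proof (Rmax_r (f 0) MG).
      specialize (Hpos _ Ht) as HpZ. specialize (Hpos (t + c2) ltac:(lra)).
      specialize (HMG (t + c2) ltac:(lra)).
      unfold Bf. fold b. unfold Z.
      replace (- (c1 + t + b * ln (Gf g beta (t + c2))) / b) with (- (c1 + t) / b + - ln (Gf g beta (t + c2))) by (field; lra).
      rewrite exp_plus, exp_Ropp, exp_ln by auto. fold (Z t).
      pose proof (exp_pos (- (c1 + t) / b)). field. repeat split; lra.
    - replace (Finite 1) with (Finite (/ 1 * / 1)) by (f_equal; field).
      apply lim_mult; apply lim_inv; auto; try lra. apply (lim_shift (fun s => Gf g beta s / Derive g s)); auto. }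
  apply (lim_ext_ev (fun t => (calF f beta (U t) / Bf g beta (w t)) * (Bf g beta (w t) / Bf g beta (Z t)) * (Bf g beta (Z t) / (b * exp (- (c1 + t) / b))))).
  - pose proof (proj1 (lim_pinf_eps Z) S3 (f 0)) as EZ.
    pose proof (proj1 (lim_pinf_eps w) S7 (f 0)) as Ew.
    apply (ev_impl _ _ (ev_and _ _ EZ Ew)). intros t [H1 H2].
    pose proof (B_pos f h g beta H _ H1). pose proof (B_pos f h g beta H _ H2).
    pose proof (exp_pos (- (c1 + t) / b)). field. repeat split; lra.
  - replace (Finite 1) with (Finite (1 * 1 * 1)) by (f_equal; ring).
    apply lim_mult; auto. apply lim_mult; auto.
Qed.

Theorem mainTheorem18
  (f g : R -> R) (alpha beta gamma : R)
  (Hg : forall t, f 0 <= t -> 0 <= g t /\ f (g t) = t)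
  (HA : hypA f g alpha beta gamma)
  (lam : R) (u : R -> R)
  (Hsol : thm11_solution f g alpha beta gamma lam u) :
  let theta := gamma + 2 + beta - alpha in
  let ustar := fun r => u (r * Rpower lam (- (1 / theta))) in
  let K := (beta + 1) / theta * Rpower (alpha - beta - 1) (- (1 / (beta + 1))) in
  exists delta : R -> R,
    filterlim delta (at_right 0) (locally 0) /\
    exists eta : R, 0 < eta /\
      forall r, 0 < r < eta ->
        calF f beta (ustar r) = K * Rpower r (theta / (beta + 1)) * (1 + delta r).
Proof.
  intros theta ustar K.
  destruct (build_Hset f g alpha beta gamma Hg HA) as [h H].
  pose proof HA as HA'. unfold hypA in HA'. cbv zeta in HA'.
  destruct HA' as (_ & _ & _ & _ & HA3 & HA4 & _ & _ & _ & _ & Hal & Hb & Hth).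
  unfold thm11_solution in Hsol. cbv zeta in Hsol.
  destruct Hsol as (Hlam & _ & _ & _ & _ & Hu0 & _ & _ & _ & Hasym).
  destruct Hasym as [C [eta [Heta Hasym]]].
  fold theta in Hth, Hasym.
  set (b := beta + 1) in *.
  assert (Hbp : 0 < b) by (unfold b; lra).
  assert (Hbdef : b = beta + 1) by reflexivity.
  set (c1 := ln (Rpower theta b * (alpha - beta - 1)) - ln lam).
  set (c2 := ln b - ln lam).
  set (U := fun t => u (exp (- t / theta))).
  assert (HU : ev (fun t => 0 <= U t /\ Rabs (U t - g (c1 + t + b * ln (Gf g beta (t + c2)))) <= C * Rabs (Derive_n g 2 t))).
  { set (m := Rmin eta 1).
    assert (Hm : 0 < m /\ m <= eta /\ m <= 1) by (unfold m; split; [apply Rmin_glb_lt; lra| split; [apply Rmin_l|apply Rmin_r]]).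
    exists (theta * Rabs (ln m)). intros t Ht.
    set (r := exp (- t / theta)).
    assert (Hr0 : 0 < r) by apply exp_pos.
    assert (Hrm : r < m).
    { unfold r. rewrite <- (exp_ln m) by lra. apply exp_increasing.
      assert (Rabs (ln m) < t / theta).
      { apply (Rmult_lt_reg_l theta); auto. unfold Rdiv. rewrite <- Rmult_assoc, Rinv_r_simpl_m by lra. lra. }
      pose proof (Rle_abs (- ln m)). rewrite Rabs_Ropp in H1. unfold Rdiv in *. lra. }
    assert (Hlr : ln r = - t / theta) by (unfold r; apply ln_exp).
    split. unfold U; fold r. apply Hu0; lra.
    specialize (Hasym r ltac:(lra)).
    assert (Etau : ln (b / (lam * Rpower r theta)) = t + c2).
    { unfold Rpower. rewrite Hlr. rewrite ln_div, ln_mult, ln_exp; try lra; try apply exp_pos.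
      unfold c2. field. lra. apply Rmult_lt_0_compat; auto; apply exp_pos. }
    assert (Erp : ln (Rpower r (- theta)) = t).
    { unfold Rpower. rewrite ln_exp, Hlr. field. lra. }
    rewrite Etau, Erp in Hasym.
    replace (c1 + t + b * ln (Gf g beta (t + c2))) with
      (ln (Rpower theta b * (alpha - beta - 1)) - ln lam - theta * ln r +
       b * ln (Derive_n g 1 (t + c2) + b * Derive_n g 2 (t + c2) * ln (Derive_n g 1 (t + c2)))).
    exact Hasym.
    rewrite Hlr. unfold c1, Gf. fold b. simpl. change (fun x : R => g x) with g. change (fun x : R => Derive g x) with (Derive g). replace (theta * (- t / theta)) with (- t) by (field; lra). ring. }
  assert (HA3' : forall hh : R -> R, littleo_t hh -> is_lim (fun t => Derive g t / Derive g (t + hh t)) p_infty 1).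
  { exact HA3. }
  pose proof (core f h g beta H HA3' HA4 c1 c2 C U HU) as Hcore.
  fold b in Hcore.
  set (tr := fun r => - theta * ln r + ln lam).
  assert (HKpos : 0 < K).
  { unfold K. apply Rmult_lt_0_compat. apply Rdiv_lt_0_compat; lra. apply exp_pos. }
  assert (Eu : forall r, 0 < r -> ustar r = U (tr r)).
  { intros r Hr. unfold ustar, U, tr. f_equal. unfold Rpower.
    rewrite <- (exp_ln r) at 1 by auto. rewrite <- exp_plus. f_equal. field. lra. }
  assert (EK : forall r, 0 < r -> K * Rpower r (theta / b) = b * exp (- (c1 + tr r) / b)).
  { intros r Hr. unfold K, tr, c1. fold b.
    assert (HA0 : 0 < alpha - beta - 1) by lra.
    rewrite ln_mult by (try apply exp_pos; lra).
    assert (Eth : ln (Rpower theta b) = b * ln theta) by (unfold Rpower; apply ln_exp).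
    rewrite Eth. unfold Rpower.
    replace (b / theta) with (b * exp (- ln theta)) by (rewrite exp_Ropp, exp_ln by lra; field; lra).
    rewrite !Rmult_assoc. f_equal. rewrite <- !exp_plus. f_equal. field. lra. }
  exists (fun r => calF f beta (ustar r) / (K * Rpower r (theta / b)) - 1).
  split.
  - apply filterlim_locally. intros eps.
    destruct (proj1 (lim_eps _ 1) Hcore eps (cond_pos eps)) as [M HM].
    assert (Hd : 0 < exp ((ln lam - M) / theta)) by apply exp_pos.
    exists (mkposreal _ Hd). intros r Hr Hr0.
    change (Rabs (r - 0) < exp ((ln lam - M) / theta)) in Hr.
    rewrite Rminus_0_r, Rabs_pos_eq in Hr by lra.
    change (Rabs (calF f beta (ustar r) / (K * Rpower r (theta / b)) - 1 - 0) < eps).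
    rewrite Rminus_0_r, Eu, EK by auto.
    apply HM. unfold tr.
    apply ln_increasing in Hr; auto. rewrite ln_exp in Hr.
    apply (Rmult_lt_compat_l theta) in Hr; [|lra].
    replace (theta * ((ln lam - M) / theta)) with (ln lam - M) in Hr by (field; lra). lra.
  - exists 1. split; [lra|]. intros r [Hr _].
    assert (0 < Rpower r (theta / b)) by apply exp_pos.
    fold b. field. split; lra.
Qed.
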